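(* Let $\phi$ be the standard normal density, $\gamma(x)=\frac{1}{\pi(1+x^2)}$ the standard Cauchy density, $g=\phi*\gamma$, and for $\alpha\in(0,1)$ let $t(\alpha)>0$ be the posterior median threshold defined in the context. For $A\ge0$ and $n\ge 2$ let $t_A=\sqrt{2(1+A)\log n}$ and $\alpha_A=t^{-1}(t_A)$. Then there exist $N_0>0$ and $C>0$, both independent of $A$, such that for all $n\ge N_0$, \[ \alpha_A\le C(1+A)(\log n)\,n^{-1-A}. \]
   Context: For $\alpha\in[0,1]$, consider the single-coordinate posterior $(1-a(x))\delta_0+a(x)\gamma_x(u)\,du$ of $\theta$ given $x\sim\mathcal{N}(\theta,1)$ under the prior $(1-\alpha)\delta_0+\alpha\gamma(u)\,du$, where $a(x)=\frac{\alpha g(x)}{(1-\alpha)\phi(x)+\alpha g(x)}$ and $\gamma_x(u)=\phi(x-u)\gamma(u)/g(x)$. Its median is $0$ if and only if $|x|\le t(\alpha)$, which defines $t(\alpha)$; the map $\alpha\mapsto t(\alpha)$ is continuous and strictly decreasing, so $t^{-1}$ exists. *)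

(* Defs.v *)
From Stdlib Require Import Reals.
From Coquelicot Require Import Coquelicot.
Open Scope R_scope.

Definition phi (x : R) : R := exp (- x ^ 2 / 2) / sqrt (2 * PI).

Definition cauchy (x : R) : R := 1 / (PI * (1 + x ^ 2)).

Definition g (x : R) : R :=
  RInt_gen (fun u => phi (x - u) * cauchy u)
    (Rbar_locally m_infty) (Rbar_locally p_infty).

Definition post_a (alpha x : R) : R :=
  alpha * g x / ((1 - alpha) * phi x + alpha * g x).

Definition gamma_x (x u : R) : R := phi (x - u) * cauchy u / g x.

Definition post_neg (alpha x : R) : R :=
  post_a alpha x * RInt_gen (gamma_x x) (Rbar_locally m_infty) (at_point 0).
Definition post_pos (alpha x : R) : R :=
  post_a alpha x * RInt_gen (gamma_x x) (at_point 0) (Rbar_locally p_infty).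

(* the posterior median is 0 (the posterior cdf jumps across 1/2 at 0) *)
Definition post_median_zero (alpha x : R) : Prop :=
  post_neg alpha x <= 1 / 2 /\ post_pos alpha x <= 1 / 2.

Definition tA (A : R) (n : nat) : R := sqrt (2 * (1 + A) * ln (INR n)).

(* Main.v *)
Require Import Defs.
From Stdlib Require Import Reals Lra Classical FunctionalExtensionality.
From Coquelicot Require Import Coquelicot.
Open Scope R_scope.
Lemma ball_R (L e y : R) : ball L e y <-> Rabs (y - L) < e.
Proof. unfold ball; simpl. unfold AbsRing_ball, abs, minus, plus, opp; simpl. tauto. Qed.

Lemma mono_lim (F : R -> R) (M : R) :
  (forall x y, 0 <= x <= y -> F x <= F y) -> (forall x, 0 <= x -> F x <= M) ->
  exists L, filterlim F (Rbar_locally p_infty) (locally L) /\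
    (forall x, 0 <= x -> F x <= L) /\ L <= M.
Proof.
  intros Hm Hb.
  set (E := fun y => exists x, 0 <= x /\ y = F x).
  assert (HB : bound E). { exists M. intros y [x [Hx ->]]. auto. }
  assert (HE : exists y, E y). { exists (F 0), 0. split; [lra|auto]. }
  destruct (completeness E HB HE) as [L [HL1 HL2]].
  exists L. split; [|split].
  - apply filterlim_locally. intros eps.
    assert (Hx : exists x0, 0 <= x0 /\ L - eps < F x0).
    { apply NNPP. intro Hn.
      assert (L <= L - eps). { apply HL2. intros y [x [Hx ->]].
        destruct (Rle_dec (F x) (L - eps)) as [h|h]; auto. exfalso; apply Hn; exists x; split; auto; lra. }
      destruct eps; simpl in *; lra. }
    destruct Hx as [x0 [Hx0 Hlt]].
    exists x0. intros x Hx. apply ball_R.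
    assert (F x0 <= F x) by (apply Hm; lra).
    assert (F x <= L) by (apply HL1; exists x; split; [lra|auto]).
    apply Rabs_def1; lra.
  - intros x Hx. apply HL1. exists x. auto.
  - apply HL2. intros y [x [Hx ->]]. auto.
Qed.
Lemma gen_right (f : R -> R) (Hc : forall x, continuous f x) L :
  filterlim (fun b => RInt f 0 b) (Rbar_locally p_infty) (locally L) ->
  is_RInt_gen f (at_point 0) (Rbar_locally p_infty) L.
Proof.
  intro H. unfold is_RInt_gen.
  apply filterlimi_lim_ext with (f := fun ab => RInt f (fst ab) (snd ab)).
  { intro ab. apply (RInt_correct (V:=R_CompleteNormedModule)). apply ex_RInt_continuous. intros; apply Hc. }
  apply filterlim_locally. intros eps.
  destruct (proj1 (@filterlim_locally R R_UniformSpace _ _ _ L) H eps) as [M HM].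
  apply Filter_prod with (fun a => a = 0) (fun b => M < b).
  - reflexivity.
  - exists M. auto.
  - intros a b -> Hb. simpl. apply HM; auto.
Qed.
Lemma gen_left (f : R -> R) (Hc : forall x, continuous f x) L :
  filterlim (fun x => RInt f (-x) 0) (Rbar_locally p_infty) (locally L) ->
  is_RInt_gen f (Rbar_locally m_infty) (at_point 0) L.
Proof.
  intro H. unfold is_RInt_gen.
  apply filterlimi_lim_ext with (f := fun ab => RInt f (fst ab) (snd ab)).
  { intro ab. apply (RInt_correct (V:=R_CompleteNormedModule)). apply ex_RInt_continuous. intros; apply Hc. }
  apply filterlim_locally. intros eps.
  destruct (proj1 (@filterlim_locally R R_UniformSpace _ _ _ L) H eps) as [M HM].
  apply Filter_prod with (fun a => a < -M) (fun b => b = 0).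
  - exists (-M). auto.
  - reflexivity.
  - intros a b Ha ->. simpl. replace a with (- - a) by ring. apply HM; lra.
Qed.
Definition ff (t : R) := fun u => phi (t - u) * Defs.cauchy u.
Lemma sqrt2pi_pos : 0 < sqrt (2*PI).
Proof. apply sqrt_lt_R0. generalize PI_RGT_0; lra. Qed.
Lemma ff_cont t x : continuous (ff t) x.
Proof. apply (@ex_derive_continuous R_AbsRing R_NormedModule). unfold ff, phi, Defs.cauchy. auto_derive.
 pose proof PI_RGT_0. nra. Qed.
Lemma exR t a b : ex_RInt (ff t) a b.
Proof. apply (@ex_RInt_continuous R_CompleteNormedModule). intros; apply ff_cont. Qed.
Lemma exp_le x y : x <= y -> exp x <= exp y.
Proof. intros [h|h]; [left; apply exp_increasing; auto| subst; lra]. Qed.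
Lemma cauchy_pos u : 0 < Defs.cauchy u.
Proof. unfold Defs.cauchy. pose proof PI_RGT_0. apply Rdiv_lt_0_compat; nra. Qed.
Lemma phi_pos u : 0 < phi u.
Proof. unfold phi. apply Rdiv_lt_0_compat; [apply exp_pos|apply sqrt2pi_pos]. Qed.
Lemma ff_nonneg t u : 0 <= ff t u.
Proof. unfold ff. pose proof (phi_pos (t-u)); pose proof (cauchy_pos u). nra. Qed.
Lemma ff_le_k t u : ff t u <= / sqrt (2*PI) * Defs.cauchy u.
Proof. unfold ff, phi. pose proof (cauchy_pos u). pose proof sqrt2pi_pos.
  apply Rmult_le_compat_r; [lra|]. unfold Rdiv. rewrite <- (Rmult_1_l (/ sqrt (2*PI))) at 2.
  apply Rmult_le_compat_r; [left; apply Rinv_0_lt_compat; auto|].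
  rewrite <- exp_0. apply exp_le. assert (0 <= (t-u)^2) by apply pow2_ge_0. lra. Qed.
Lemma ff_left t u : 0 <= t -> u <= 0 -> ff t u <= phi t * Defs.cauchy u.
Proof. intros Ht Hu. unfold ff, phi. pose proof (cauchy_pos u). pose proof sqrt2pi_pos.
  apply Rmult_le_compat_r; [lra|]. unfold Rdiv.
  apply Rmult_le_compat_r; [left; apply Rinv_0_lt_compat; auto|].
  apply exp_le. assert (t^2 <= (t-u)^2) by nra. lra. Qed.
Lemma ff_mid t u : 0 <= t -> t < u < t + 1 -> phi 1 * Defs.cauchy (t+1) <= ff t u.
Proof. intros Ht Hu. unfold ff. pose proof PI_RGT_0.
  apply Rmult_le_compat; try (left; apply phi_pos); try (left; apply cauchy_pos).
  - unfold phi, Rdiv. apply Rmult_le_compat_r; [left; apply Rinv_0_lt_compat; apply sqrt2pi_pos|].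
    apply exp_le. assert ((t-u)^2 <= 1^2) by nra. lra.
  - unfold Defs.cauchy, Rdiv. rewrite !Rmult_1_l. apply Rinv_le_contravar.
    + apply Rmult_lt_0_compat; [lra| pose proof (pow2_ge_0 u); lra].
    + apply Rmult_le_compat_l; [lra|]. simpl. nra.
Qed.
Lemma cauchy_RInt k a b : is_RInt (fun u => k * Defs.cauchy u) a b (k * (atan b - atan a) / PI).
Proof.
  pose proof PI_RGT_0.
  replace (k * (atan b - atan a) / PI) with (minus (atan b * (k/PI)) (atan a * (k/PI))).
  2:{ unfold minus, plus, opp; simpl. field. lra. }
  apply (is_RInt_derive (fun x => atan x * (k/PI))).
  - intros x _. 
    assert (H1 := derivable_pt_lim_atan x). apply is_derive_Reals in H1.
    assert (H2 := @is_derive_scal_l R_AbsRing R_NormedModule atan x _ (k/PI) H1).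
    simpl in H2. unfold scal in H2; simpl in H2. unfold mult in H2; simpl in H2.
    replace (k * Defs.cauchy x) with (/ (1 + x ^ 2) * (k/PI)). exact H2.
    unfold Defs.cauchy. field. split; [nra|lra].
  - intros x _. apply (@ex_derive_continuous R_AbsRing R_NormedModule). unfold Defs.cauchy. auto_derive. nra.
Qed.
Lemma RInt_cauchy k a b : RInt (fun u => k * Defs.cauchy u) a b = k * (atan b - atan a) / PI.
Proof. apply is_RInt_unique, cauchy_RInt. Qed.
Lemma exC k a b : ex_RInt (fun u => k * Defs.cauchy u) a b.
Proof. eexists; apply cauchy_RInt. Qed.

Lemma right_part t : 0 <= t -> exists P,
  is_RInt_gen (ff t) (at_point 0) (Rbar_locally p_infty) P /\ phi 1 * Defs.cauchy (t+1) <= P.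
Proof.
  intros Ht. pose proof PI_RGT_0. pose proof sqrt2pi_pos.
  assert (Hk : 0 < / sqrt (2*PI)) by (apply Rinv_0_lt_compat; auto).
  destruct (mono_lim (fun b => RInt (ff t) 0 b) (/ sqrt (2*PI))) as [L [HL1 [HL2 HL3]]].
  - intros x y Hxy. rewrite <- (RInt_Chasles (ff t) 0 x y) by apply exR.
    assert (0 <= RInt (ff t) x y) by (apply RInt_ge_0; [lra|apply exR|intros; apply ff_nonneg]).
    unfold plus; simpl. lra.
  - intros x Hx. eapply Rle_trans.
    apply (RInt_le _ (fun u => / sqrt (2*PI) * Defs.cauchy u)); auto using exR, exC.
    intros; apply ff_le_k.
    rewrite RInt_cauchy, atan_0. pose proof (atan_bound x).
    apply Rle_trans with (/ sqrt (2 * PI) * (PI/2) / PI).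
    + unfold Rdiv. apply Rmult_le_compat_r; [left; apply Rinv_0_lt_compat; auto|]. nra.
    + replace (/ sqrt (2 * PI) * (PI / 2) / PI) with (/ sqrt (2 * PI) * /2) by (field; lra). lra.
  - exists L. split. apply gen_right; auto using ff_cont.
    apply Rle_trans with (RInt (ff t) 0 (t+1)); [|apply HL2; lra].
    rewrite <- (RInt_Chasles (ff t) 0 t (t+1)) by apply exR.
    assert (0 <= RInt (ff t) 0 t) by (apply RInt_ge_0; [lra|apply exR|intros; apply ff_nonneg]).
    assert (phi 1 * Defs.cauchy (t+1) <= RInt (ff t) t (t+1)).
    { eapply Rle_trans; [|apply (RInt_le (fun _ => phi 1 * Defs.cauchy (t+1)))]; auto using exR.
      - rewrite RInt_const. unfold scal; simpl; unfold mult; simpl. lra.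
      - lra.
      - apply ex_RInt_const.
      - intros; apply ff_mid; auto. }
    unfold plus; simpl. lra.
Qed.

Lemma left_part t : 0 <= t -> exists N,
  is_RInt_gen (ff t) (Rbar_locally m_infty) (at_point 0) N /\ 0 <= N /\ N <= phi t / 2.
Proof.
  intros Ht. pose proof PI_RGT_0. pose proof (phi_pos t).
  destruct (mono_lim (fun x => RInt (ff t) (-x) 0) (phi t / 2)) as [L [HL1 [HL2 HL3]]].
  - intros x y Hxy. rewrite <- (RInt_Chasles (ff t) (-y) (-x) 0) by apply exR.
    assert (0 <= RInt (ff t) (-y) (-x)) by (apply RInt_ge_0; [lra|apply exR|intros; apply ff_nonneg]).
    unfold plus; simpl. lra.
  - intros x Hx. eapply Rle_trans.
    apply (RInt_le _ (fun u => phi t * Defs.cauchy u)); auto using exR, exC. lra.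
    intros; apply ff_left; lra.
    rewrite RInt_cauchy, atan_0. pose proof (atan_bound (-x)).
    apply Rle_trans with (phi t * (PI/2) / PI).
    + unfold Rdiv. apply Rmult_le_compat_r; [left; apply Rinv_0_lt_compat; auto|]. nra.
    + replace (phi t * (PI / 2) / PI) with (phi t / 2) by (field; lra). lra.
  - exists L. split. apply gen_left; auto using ff_cont. split; auto.
    replace 0 with (RInt (ff t) (-0) 0). apply HL2; lra.
    rewrite Ropp_0. exact (@RInt_point R_CompleteNormedModule 0 (ff t)).
Qed.
Lemma ln_le' x y : 0 < x -> x <= y -> ln x <= ln y.
Proof. intros h [h'|h']; [left; apply ln_increasing; auto| subst; lra]. Qed.

Lemma num_ineq t : 20 <= t -> exp (- t^2/2) * PI * (1 + (t+1)^2) <= exp (-1/2).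
Proof.
  intros Ht. set (s := t^2/2 - 1/2).
  assert (Hs : exp (- t^2/2) * exp s = exp (-1/2)).
  { rewrite <- exp_plus. f_equal. unfold s. field. }
  assert (He : (1 + s/2)^2 <= exp s).
  { replace s with (s/2 + s/2) at 2 by field. rewrite exp_plus.
    pose proof (exp_ineq1_le (s/2)). assert (0 <= s/2) by (unfold s; simpl; nra). simpl. nra. }
  assert (HQ : PI * (1 + (t+1)^2) <= (1 + s/2)^2).
  { pose proof PI_4. pose proof PI_RGT_0. unfold s. simpl.
    assert (1 + (t+1)*((t+1)*1) <= 3 * (t*t)) by nra.
    assert (PI * (1 + (t+1)*((t+1)*1)) <= 12 * (t*t)) by nra.
    assert (t*t >= 400) by nra.
    nra. }
  rewrite <- Hs. rewrite Rmult_assoc. apply Rmult_le_compat_l; [left; apply exp_pos|]. lra.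
Qed.
Theorem lemma12 :
  exists N0 C : R, 0 < N0 /\ 0 < C /\
    forall (A : R) (n : nat) (alphaA : R),
      0 <= A -> (2 <= n)%nat -> N0 <= INR n ->
      0 < alphaA < 1 ->
      (forall x : R, post_median_zero alphaA x <-> Rabs x <= tA A n) ->
      alphaA <= C * (1 + A) * ln (INR n) * Rpower (INR n) (- 1 - A).
Proof.
  exists (exp 200), 112. split; [apply exp_pos|]. split; [lra|].
  intros A n al HA Hn HN Hal Hiff.
  assert (Hn0 : 0 < INR n) by (pose proof (exp_pos 200); lra).
  set (l := ln (INR n)).
  assert (Hl : 200 <= l). { unfold l. rewrite <- (ln_exp 200). apply ln_le'; auto. apply exp_pos. }
  set (t := tA A n).
  assert (Ht2 : t * t = 2 * (1 + A) * l).
  { unfold t, tA. apply sqrt_sqrt. fold l. nra. }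
  assert (Ht0 : 0 <= t) by (unfold t, tA; apply sqrt_pos).
  assert (Ht400 : t * t >= 400) by nra.
  assert (Ht : 20 <= t).
  { apply Rnot_lt_le; intro h. assert (t*t < 20*20) by (apply Rmult_le_0_lt_compat; lra). lra. }
  destruct (left_part t Ht0) as [N [HN1 [HN2 HN3]]].
  destruct (right_part t Ht0) as [P [HP1 HP2]].
  pose proof (phi_pos 1) as Hp1. pose proof (cauchy_pos (t+1)) as Hc1. pose proof (phi_pos t) as Hpt.
  assert (Hg : g t = N + P).
  { change (g t) with (RInt_gen (ff t) (Rbar_locally m_infty) (Rbar_locally p_infty)).
    apply is_RInt_gen_unique. apply (is_RInt_gen_Chasles (ff t) 0 N P); auto. }
  assert (HG : 0 < g t) by nra.
  assert (Hpos : RInt_gen (gamma_x t) (at_point 0) (Rbar_locally p_infty) = P / g t).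
  { apply is_RInt_gen_unique.
    assert (H := is_RInt_gen_scal (ff t) (/ g t) P HP1).
    replace (gamma_x t) with (fun y => scal (/ g t) (ff t y)).
    - replace (P / g t) with (scal (/ g t) P). exact H.
      unfold scal; simpl; unfold mult; simpl. field. lra.
    - apply functional_extensionality. intro y. unfold gamma_x, ff, scal; simpl; unfold mult; simpl.
      field. lra. }
  assert (Hmed : post_median_zero al t).
  { apply Hiff. rewrite Rabs_pos_eq by lra. apply Rle_refl. }
  destruct Hmed as [_ Hpp]. unfold post_pos, post_a in Hpp. rewrite Hpos in Hpp.
  set (D := (1 - al) * phi t + al * g t) in Hpp.
  assert (HD : 0 < D) by (unfold D; nra).
  assert (H2 : al * P <= D / 2).
  { replace (al * P) with (al * g t / D * (P / g t) * D) by (field; lra). 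
    apply Rmult_le_compat_r with (r := D) in Hpp; [|lra]. lra. }
  unfold D in H2. rewrite Hg in H2.
  assert (Hnum := num_ineq t Ht).
  set (E := exp (- t^2/2)) in *.
  set (Q := 1 + (t+1)^2) in *.
  assert (HQ : 0 < Q) by (unfold Q; pose proof (pow2_ge_0 (t+1)); lra).
  assert (Hc : phi 1 * Defs.cauchy (t+1) = exp (-1/2) / sqrt (2*PI) / (PI * Q)).
  { unfold phi, Defs.cauchy. replace (- 1^2/2) with (-1/2) by field. fold Q. field.
    pose proof sqrt2pi_pos. pose proof PI_RGT_0. split; lra. }
  assert (Hphi : phi t = E / sqrt (2*PI)) by reflexivity.
  pose proof sqrt2pi_pos as Hs. pose proof PI_RGT_0 as Hpi.
  assert (Hpc : phi t <= phi 1 * Defs.cauchy (t+1)).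
  { rewrite Hc, Hphi. unfold Rdiv. rewrite Rmult_assoc. rewrite (Rmult_comm (/ sqrt (2*PI))).
    rewrite <- Rmult_assoc. apply Rmult_le_compat_r; [left; apply Rinv_0_lt_compat; auto|].
    apply Rmult_le_reg_r with (PI * Q). nra.
    rewrite Rmult_assoc, Rinv_l by nra. lra. }
  assert (Hk : al * (phi 1 * Defs.cauchy (t+1)) <= 2 * phi t) by nra.
  rewrite Hc, Hphi in Hk.
  assert (Hk2 : al * exp (-1/2) <= 2 * E * PI * Q).
  { apply Rmult_le_reg_r with (/ sqrt (2*PI) / (PI * Q)).
    apply Rdiv_lt_0_compat; [apply Rinv_0_lt_compat; auto| nra].
    replace (al * exp (-1/2) * (/ sqrt (2*PI) / (PI * Q))) with (al * (exp (-1/2) / sqrt (2*PI) / (PI * Q))) by (field; split; lra).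
    replace (2 * E * PI * Q * (/ sqrt (2*PI) / (PI * Q))) with (2 * (E / sqrt (2*PI))) by (field; split; lra).
    lra. }
  assert (Hh : exp (1/2) * exp (-1/2) = 1) by (rewrite <- exp_plus; replace (1/2 + -1/2) with 0 by field; apply exp_0).
  assert (Hh2 : exp (1/2) <= 2).
  { assert (exp (1/2) * exp (1/2) <= 3) by (rewrite <- exp_plus; replace (1/2+1/2) with 1 by field; apply exp_le_3).
    pose proof (exp_pos (1/2)). nra. }
  assert (Hal2 : al <= 2 * E * PI * Q * exp (1/2)).
  { replace al with (al * exp (-1/2) * exp (1/2)) by (rewrite Rmult_assoc, (Rmult_comm (exp (-1/2))), Hh; ring).
    apply Rmult_le_compat_r; [left; apply exp_pos|]. lra. }
  assert (HRp : Rpower (INR n) (-1 - A) = E).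
  { unfold Rpower, E. f_equal. fold l. simpl. nra. }
  rewrite HRp. fold l.
  assert (HQ7 : Q <= 7 * (1 + A) * l) by (unfold Q; simpl; nra).
  assert (HE : 0 < E) by apply exp_pos.
  pose proof PI_4.
  apply Rle_trans with (1 := Hal2).
  assert (Q * exp (1/2) <= 7 * (1 + A) * l * 2).
  { apply Rmult_le_compat; [lra| left; apply exp_pos| lra| lra]. }
  assert (PI * (Q * exp (1/2)) <= 4 * (7 * (1 + A) * l * 2)).
  { apply Rmult_le_compat; [lra| pose proof (exp_pos (1/2)); nra| lra| lra]. }
  nra.
Qed.
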